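(* Suppose $(A,V,B)$ satisfies Schur-Weyl duality and $e,f\in B$ are idempotents with $Ve\neq0$, $ef=f$ and $fe=e$. Then the following are equivalent: (1) $(A,Ve,eBe)$ satisfies Schur-Weyl duality; (2) every $eBe$-linear endomorphism of $Ve$ extends to a $B$-linear endomorphism of $V$; (3) $(A,Vf,fBf)$ satisfies Schur-Weyl duality; (4) every $fBf$-linear endomorphism of $Vf$ extends to a $B$-linear endomorphism of $V$.
   Context: $k$ is a field, $A,B$ are $k$-algebras, $V$ an $(A,B)$-bimodule. $(A,V,B)$ satisfies Schur-Weyl duality if the image of $A$ in $\operatorname{End}_k(V)$ (via $a\mapsto(v\mapsto av)$) equals $\operatorname{End}_B(V)$ and the image of $B$ (via $b\mapsto(v\mapsto vb)$) equals $\operatorname{End}_A(V)$. For an idempotent $e$, $Ve$ is an $(A,eBe)$-bimodule. *)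

(* Defs.v *)
From HB Require Import structures.
From mathcomp Require Import all_boot all_order all_algebra.
Set Implicit Arguments. Unset Strict Implicit. Unset Printing Implicit Defensive.
Import GRing.Theory.
Local Open Scope ring_scope.

Section SchurWeyl.
Variables (k : fieldType) (A B : algType k) (V : lmodType k).
Variables (actA : A -> V -> V) (actB : V -> B -> V).

Definition bimodule : Prop :=
  (forall a x u v, actA a (x *: u + v) = x *: actA a u + actA a v) /\
      (forall a b x v, actA (x *: a + b) v = x *: actA a v + actA b v) /\
      (forall v, actA 1 v = v) /\
      (forall a a' v, actA (a * a') v = actA a (actA a' v)) /\
      (forall b x u v, actB (x *: u + v) b = x *: actB u b + actB v b) /\
      (forall b c x v, actB v (x *: b + c) = x *: actB v b + actB v c) /\
      (forall v, actB v 1 = v) /\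
      (forall b b' v, actB v (b * b') = actB (actB v b) b') /\
      (forall a b v, actB (actA a v) b = actA a (actB v b)).

(** Subspaces of V and subsets of B are given as predicates; an endomorphism
    of the subspace W is represented by a function V -> V, only its values on
    W matter. *)
Definition k_endo (W : V -> Prop) (phi : V -> V) : Prop :=
  (forall v, W v -> W (phi v)) /\
  (forall x u v, W u -> W v -> phi (x *: u + v) = x *: phi u + phi v).

Definition right_linear (W : V -> Prop) (C : B -> Prop) (phi : V -> V) : Prop :=
  forall c v, C c -> W v -> phi (actB v c) = actB (phi v) c.

Definition left_linear (W : V -> Prop) (phi : V -> V) : Prop :=
  forall a v, W v -> phi (actA a v) = actA a (phi v).

Definition schur_weyl (W : V -> Prop) (C : B -> Prop) : Prop :=
  (forall phi, (k_endo W phi /\ right_linear W C phi) <->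
               exists a : A, forall v, W v -> phi v = actA a v) /\
  (forall psi, (k_endo W psi /\ left_linear W psi) <->
               exists2 c, C c & forall v, W v -> psi v = actB v c).

Definition fullV : V -> Prop := fun _ => True.
Definition fullB : B -> Prop := fun _ => True.

Definition Vcut (e : B) : V -> Prop := fun w => exists v, w = actB v e.
Definition corner (e : B) : B -> Prop := fun c => exists b, c = e * b * e.

Definition extends_property (e : B) : Prop :=
  forall phi, k_endo (Vcut e) phi -> right_linear (Vcut e) (corner e) phi ->
    exists psi, [/\ k_endo fullV psi, right_linear fullV fullB psi &
                    forall v, Vcut e v -> psi v = phi v].

End SchurWeyl.

(* Main.v *)
Require Import Defs.
From HB Require Import structures.
From mathcomp Require Import all_boot all_order all_algebra.
Import GRing.Theory.
Local Open Scope ring_scope.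

Section Aux.
Variables (k : fieldType) (A B : algType k) (V : lmodType k).
Variables (actA : A -> V -> V) (actB : V -> B -> V).
Hypothesis hbim : bimodule actA actB.
Hypothesis hSW : schur_weyl actA actB (@fullV k V) (@fullB k B).

Definition Pprop (e : B) : Prop :=
  forall phi, k_endo (Vcut actB e) phi -> right_linear actB (Vcut actB e) (corner e) phi ->
    exists a : A, forall v, Vcut actB e v -> phi v = actA a v.

Lemma hA_lin a x u v : actA a (x *: u + v) = x *: actA a u + actA a v.
Proof. by case: hbim. Qed.
Lemma hB_lin b x u v : actB (x *: u + v) b = x *: actB u b + actB v b.
Proof. by case: hbim => _ [_ [_ [_ [H _]]]]. Qed.
Lemma hBM b b' v : actB v (b * b') = actB (actB v b) b'.
Proof. by case: hbim => _ [_ [_ [_ [_ [_ [_ [H _]]]]]]]. Qed.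
Lemma hAB a b v : actB (actA a v) b = actA a (actB v b).
Proof. by case: hbim => _ [_ [_ [_ [_ [_ [_ [_ H]]]]]]]. Qed.

Lemma Vcut_fix e (he : e * e = e) w : Vcut actB e w -> actB w e = w.
Proof. by case=> v ->; rewrite -hBM he. Qed.

Lemma Vcut_lin e x u v : Vcut actB e u -> Vcut actB e v -> Vcut actB e (x *: u + v).
Proof. by case=> u0 -> [v0 ->]; exists (x *: u0 + v0); rewrite hB_lin. Qed.

Lemma SW_iff_P e (he : e * e = e) :
  schur_weyl actA actB (Vcut actB e) (corner e) <-> Pprop e.
Proof.
split.
  by case=> H1 _ phi h1 h2; apply/(H1 phi).
move=> HP; split.
  move=> phi; split; first by case=> h1 h2; apply: HP.
  case=> a Ha; split; first split.
  - by move=> v hv; rewrite Ha //; case: hv => u ->; exists (actA a u); rewrite hAB.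
  - by move=> x u v hu hv; rewrite !Ha ?hA_lin //; apply: Vcut_lin.
  - move=> c v [b ->] hv; rewrite Ha; last first.
      by exists (actB v (e * b)); rewrite -hBM.
    by rewrite Ha // hAB.
move=> psi; split.
  case=> [[hcl hlin] hll].
  pose Psi v := psi (actB v e).
  have : k_endo (@fullV k V) Psi /\ left_linear actA (@fullV k V) Psi.
    split; first split => //.
      move=> x u v _ _; rewrite /Psi hB_lin hlin //; by [exists u | exists v].
    by move=> a v _; rewrite /Psi hAB hll //; exists v.
  move/((proj2 hSW) Psi) => [c _ Hc].
  exists (e * c * e); first by exists c.
  move=> w hw.
  have Pw : psi w = actB w c by rewrite -Hc // /Psi Vcut_fix.
  rewrite -(Vcut_fix _ he _ (hcl _ hw)) Pw -hBM.
  by rewrite -{1}(Vcut_fix _ he _ hw) -hBM !mulrA.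
case=> c [b ->] Hc; split; first split.
- by move=> v hv; rewrite Hc //; exists (actB v (e * b)); rewrite -hBM.
- by move=> x u v hu hv; rewrite !Hc ?hB_lin //; apply: Vcut_lin.
- move=> a v hv; rewrite !Hc ?hAB //.
  by case: hv => u ->; exists (actA a u); rewrite hAB.
Qed.

Lemma ext_iff_P e : extends_property actB e <-> Pprop e.
Proof.
split.
  move=> H phi h1 h2; have [psi [hk hr hag]] := H phi h1 h2.
  have [a Ha] := (proj1 ((proj1 hSW) psi)) (conj hk hr).
  by exists a => v hv; rewrite -hag // Ha.
move=> H phi h1 h2; have [a Ha] := H phi h1 h2.
exists (actA a); split => //.
- by split => // x u v _ _; rewrite hA_lin.
- by move=> c v _ _; rewrite hAB.
- by move=> v hv; rewrite Ha.
Qed.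

Lemma P_trans e f (he : e * e = e) (hf : f * f = f) (hef : e * f = f) (hfe : f * e = e) :
  Pprop e -> Pprop f.
Proof.
move=> HP phi [hcl hlin] hrl.
pose phi' w := actB (phi (actB w f)) e.
have Hf : forall w, Vcut actB f (actB w f) by move=> w; exists w.
have : k_endo (Vcut actB e) phi'.
  split; first by move=> v _; exists (phi (actB v f)).
  by move=> x u v _ _; rewrite /phi' hB_lin hlin // hB_lin.
move=> hk.
have : right_linear actB (Vcut actB e) (corner e) phi'.
  move=> c w [b ->] _; rewrite /phi'.
  have E1 : actB (actB w (e * b * e)) f = actB (actB w f) (e * b * e * f).
    by rewrite -!hBM !mulrA hfe.
  rewrite E1 hrl //; last by exists (e * b * e * f); rewrite !mulrA hfe -(mulrA _ f f) hf.
  by rewrite -!hBM -!mulrA hfe he !mulrA he.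
move=> hr; have [a Ha] := HP phi' hk hr.
exists a => u hu.
have Eu : actB (actB u e) f = u by rewrite -hBM hef Vcut_fix.
rewrite -(Vcut_fix _ hf _ (hcl _ hu)) -hef hBM.
have -> : actB (phi u) e = phi' (actB u e) by rewrite /phi' Eu.
by rewrite Ha; [rewrite hAB Eu | exists u].
Qed.

End Aux.

Theorem mainTheorem8 (k : fieldType) (A B : algType k) (V : lmodType k)
    (actA : A -> V -> V) (actB : V -> B -> V)
    (hbim : bimodule actA actB)
    (hSW : schur_weyl actA actB (@fullV k V) (@fullB k B))
    (e f : B) (he : e * e = e) (hf : f * f = f)
    (hVe : exists v, actB v e <> 0)
    (hef : e * f = f) (hfe : f * e = e) :
  [<-> schur_weyl actA actB (Vcut actB e) (corner e);
       extends_property actB e;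
       schur_weyl actA actB (Vcut actB f) (corner f);
       extends_property actB f].
Proof.
have S1 := @SW_iff_P _ _ _ _ _ _ hbim hSW.
have E1 := @ext_iff_P _ _ _ _ _ _ hbim hSW.
have T1 := @P_trans _ _ _ _ _ _ hbim.
tfae.
- by move/(S1 _ he)/E1.
- by move/E1/(T1 _ _ he hf hef hfe)/(S1 _ hf).
- by move/(S1 _ hf)/E1.
- by move/E1/(T1 _ _ hf he hfe hef)/(S1 _ he).
Qed.
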